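(* Let $\alpha$ be a unit-speed curve in $\mathbb{R}^3$ with nonvanishing curvature, let $\alpha_T$ be its tangent indicatrix with arc length $s_T$ and Frenet apparatus $\{T_T,N_T,B_T,\kappa_T,\tau_T\}$, and let $\beta$ be an evolute-direction curve of $\alpha_T$ (an $X$-direction curve of $\alpha_T$ with $N_\beta=T_T$). Then there is an antiderivative $\varphi=\int\tau_T\,ds_T$ of $\tau_T$ with respect to $s_T$ such that $$\frac{\tau_\beta}{\kappa_\beta}=-\cot\varphi.$$ Moreover, $$\frac{\tau_T}{\kappa_T}=\frac{\kappa_\beta^2}{(\kappa_\beta^2+\tau_\beta^2)^{3/2}}\,\frac{d}{ds_T}\Big(\frac{\tau_\beta}{\kappa_\beta}\Big).$$
   Context: Let $\alpha:I\subset\mathbb{R}\to\mathbb{R}^3$ be a unit-speed curve with curvature $\kappa>0$, torsion $\tau$ and Frenet frame $\{T,N,B\}$. The tangent indicatrix of $\alpha$ is the curve $\alpha_T=T$ on the unit sphere. Its arc length is $s_T=\int\kappa\,ds$. Its Frenet apparatus is $\{T_T,N_T,B_T,\kappa_T,\tau_T\}$, with $\frac{dT_T}{ds_T}=\kappa_TN_T$, $\frac{dN_T}{ds_T}=-\kappa_TT_T+\tau_TB_T$ and $\frac{dB_T}{ds_T}=-\tau_TN_T$. Let $x,y,z$ be real functions of $s_T$ with $x^2+y^2+z^2=1$, and set $X=xT_T+yN_T+zB_T$. An integral curve $\beta$ of $X$, meaning $d\beta/ds_T=X$, is an $X$-direction curve of $\alpha_T$. It has unit speed with arc length $s_T$.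 It is regarded as a Frenet curve with frame $\{T_\beta=X,N_\beta,B_\beta\}$, curvature $\kappa_\beta>0$ and torsion $\tau_\beta$, with derivatives taken with respect to $s_T$. $\beta$ is an evolute-direction curve of $\alpha_T$ if $N_\beta=T_T$. *)

(* Defs.v *)
From Stdlib Require Import Reals.
From Coquelicot Require Import Coquelicot.
Open Scope R_scope.

(* Vectors of R^3 as triples; Coquelicot's product normed-module structure
   gives componentwise derivatives [is_derive] for curves R -> vec3. *)
Definition vec3 : Type := (R * R * R)%type.

Definition vadd (u v : vec3) : vec3 :=
  let '(u1, u2, u3) := u in let '(v1, v2, v3) := v in (u1 + v1, u2 + v2, u3 + v3).

Definition vscal (a : R) (u : vec3) : vec3 :=
  let '(u1, u2, u3) := u in (a * u1, a * u2, a * u3).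

Definition dot (u v : vec3) : R :=
  let '(u1, u2, u3) := u in let '(v1, v2, v3) := v in u1 * v1 + u2 * v2 + u3 * v3.

Definition cross (u v : vec3) : vec3 :=
  let '(u1, u2, u3) := u in let '(v1, v2, v3) := v in
  (u2 * v3 - u3 * v2, u3 * v1 - u1 * v3, u1 * v2 - u2 * v1).

Definition cot (x : R) : R := cos x / sin x.

Definition oint (a b : Rbar) (x : R) : Prop := Rbar_lt a x /\ Rbar_lt x b.

Definition frenet_apparatus (D : R -> Prop) (T N B : R -> vec3) (k tau : R -> R) : Prop :=
  forall t, D t ->
    dot (T t) (T t) = 1 /\ dot (N t) (N t) = 1 /\ dot (T t) (N t) = 0 /\
    B t = cross (T t) (N t) /\ 0 < k t /\
    is_derive T t (vscal (k t) (N t)) /\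
    is_derive N t (vadd (vscal (- k t) (T t)) (vscal (tau t) (B t))) /\
    is_derive B t (vscal (- tau t) (N t)).

(* Main.v *)
Require Import Defs.
From Stdlib Require Import Reals Lra.
From Coquelicot Require Import Coquelicot.
Open Scope R_scope.

Lemma der_fst {V W : NormedModule R_AbsRing} (f : R -> V * W) t l :
  is_derive f t l -> is_derive (fun u => fst (f u)) t (fst l).
Proof.
  intros H. unfold is_derive in *.
  apply filterdiff_ext_lin with (fun y => fst (scal y l)).
  - eapply filterdiff_comp; [exact H|]. apply filterdiff_linear, is_linear_fst.
  - intros y. reflexivity.
Qed.

Lemma der_snd {V W : NormedModule R_AbsRing} (f : R -> V * W) t l :
  is_derive f t l -> is_derive (fun u => snd (f u)) t (snd l).
Proof.
  intros H. unfold is_derive in *.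
  apply filterdiff_ext_lin with (fun y => snd (scal y l)).
  - eapply filterdiff_comp; [exact H|]. apply filterdiff_linear, is_linear_snd.
  - intros y. reflexivity.
Qed.

Lemma dotE (u v : vec3) : dot u v = fst (fst u) * fst (fst v) + snd (fst u) * snd (fst v) + snd u * snd v.
Proof. destruct u as [[? ?] ?], v as [[? ?] ?]; reflexivity. Qed.

Lemma der_dot (U V : R -> vec3) t U' V' :
  is_derive U t U' -> is_derive V t V' ->
  is_derive (fun u => dot (U u) (V u)) t (dot U' (V t) + dot (U t) V').
Proof.
  intros HU HV.
  apply is_derive_ext with (fun u => fst (fst (U u)) * fst (fst (V u)) + snd (fst (U u)) * snd (fst (V u)) + snd (U u) * snd (V u)).
  { intros; now rewrite dotE. }
  assert (H1 := der_fst _ _ _ (der_fst _ _ _ HU)).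
  assert (H2 := der_snd _ _ _ (der_fst _ _ _ HU)).
  assert (H3 := der_snd _ _ _ HU).
  assert (G1 := der_fst _ _ _ (der_fst _ _ _ HV)).
  assert (G2 := der_snd _ _ _ (der_fst _ _ _ HV)).
  assert (G3 := der_snd _ _ _ HV).
  simpl in *.
  assert (K := is_derive_plus _ _ _ _ _ (is_derive_plus _ _ _ _ _
     (is_derive_mult _ _ _ _ _ H1 G1 Rmult_comm) (is_derive_mult _ _ _ _ _ H2 G2 Rmult_comm))
     (is_derive_mult _ _ _ _ _ H3 G3 Rmult_comm)).
  match type of K with is_derive _ _ ?l => replace (dot U' (V t) + dot (U t) V') with l end.
  - eapply is_derive_ext; [| exact K]. intros; reflexivity.
  - rewrite !dotE. unfold plus, mult; simpl. ring.
Qed.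

Lemma dot_comm u v : dot u v = dot v u.
Proof. destruct u as [[? ?] ?], v as [[? ?] ?]; simpl; ring. Qed.
Lemma dot_addl u v w : dot (vadd u v) w = dot u w + dot v w.
Proof. destruct u as [[? ?] ?], v as [[? ?] ?], w as [[? ?] ?]; simpl; ring. Qed.
Lemma dot_scall k u w : dot (vscal k u) w = k * dot u w.
Proof. destruct u as [[? ?] ?], w as [[? ?] ?]; simpl; ring. Qed.
Lemma dot_addr u v w : dot w (vadd u v) = dot w u + dot w v.
Proof. destruct u as [[? ?] ?], v as [[? ?] ?], w as [[? ?] ?]; simpl; ring. Qed.
Lemma dot_scalr k u w : dot w (vscal k u) = k * dot w u.
Proof. destruct u as [[? ?] ?], w as [[? ?] ?]; simpl; ring. Qed.
Lemma dot_cross_l u v : dot (cross u v) u = 0.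
Proof. destruct u as [[? ?] ?], v as [[? ?] ?]; simpl; ring. Qed.
Lemma dot_cross_r u v : dot (cross u v) v = 0.
Proof. destruct u as [[? ?] ?], v as [[? ?] ?]; simpl; ring. Qed.
Lemma dot_cross_self u v : dot (cross u v) (cross u v) = dot u u * dot v v - dot u v ^ 2.
Proof. destruct u as [[? ?] ?], v as [[? ?] ?]; simpl; ring. Qed.
Lemma triple u v w : dot (cross u v) w = dot u (cross v w).
Proof. destruct u as [[? ?] ?], v as [[? ?] ?], w as [[? ?] ?]; simpl; ring. Qed.

Lemma oint_loc c d t : oint c d t -> locally t (oint c d).
Proof.
  intros H. apply (open_and _ _ (open_Rbar_gt c) (open_Rbar_lt d)). exact H.
Qed.

Lemma deriv_zero_loc (f : R -> R) t l (D : R -> Prop) :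
  locally t D -> (forall u, D u -> f u = 0) -> is_derive f t l -> l = 0.
Proof.
  intros HD Hf Hd.
  assert (H : is_derive (fun _ : R => 0) t l).
  { apply is_derive_ext_loc with f; auto.
    eapply filter_imp; [|exact HD]. intros; simpl; auto. }
  assert (H0 : is_derive (fun _ : R => 0) t 0) by (apply (is_derive_const (V:=R_NormedModule))). 
  apply is_derive_unique in H. apply is_derive_unique in H0. congruence.
Qed.

Lemma key (c d : Rbar) (TT NT BT : R -> vec3) (kT tauT : R -> R)
  (HfrT : frenet_apparatus (oint c d) TT NT BT kT tauT)
  (x y z : R -> R) (Nb Bb : R -> vec3) (kb taub : R -> R)
  (Hxyz : forall t, oint c d t -> x t ^ 2 + y t ^ 2 + z t ^ 2 = 1)
  (Hfrb : frenet_apparatus (oint c d)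
     (fun t => vadd (vadd (vscal (x t) (TT t)) (vscal (y t) (NT t))) (vscal (z t) (BT t)))
     Nb Bb kb taub)
  (Hev : forall t, oint c d t -> Nb t = TT t) :
  forall t, oint c d t ->
    0 < kT t /\ kb t = - kT t * y t /\ taub t = kT t * z t /\
    is_derive y t (tauT t * z t) /\ is_derive z t (- tauT t * y t) /\
    y t ^ 2 + z t ^ 2 = 1 /\ y t < 0.
Proof.
  set (X := fun t => vadd (vadd (vscal (x t) (TT t)) (vscal (y t) (NT t))) (vscal (z t) (BT t))) in Hfrb.
  assert (Hcomb : forall t V, dot (X t) V = x t * dot (TT t) V + y t * dot (NT t) V + z t * dot (BT t) V).
  { intros t V. unfold X. rewrite !dot_addl, !dot_scall. ring. }
  assert (P : forall t, oint c d t ->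
     x t = dot (X t) (TT t) /\ y t = dot (X t) (NT t) /\ z t = dot (X t) (BT t) /\ x t = 0).
  { intros t Ht. destruct (HfrT t Ht) as (A1 & A2 & A3 & A4 & _).
    destruct (Hfrb t Ht) as (_ & _ & B3 & _).
    assert (E1 : dot (X t) (TT t) = x t).
    { rewrite Hcomb, A4, (dot_comm (NT t)), A3, dot_cross_l, A1. ring. }
    assert (E2 : dot (X t) (NT t) = y t).
    { rewrite Hcomb, A4, A3, dot_cross_r, A2. ring. }
    assert (E3 : dot (X t) (BT t) = z t).
    { rewrite Hcomb, A4, dot_cross_self, A1, A2, A3, (dot_comm (TT t)), dot_cross_l,
        (dot_comm (NT t)), dot_cross_r. ring. }
    rewrite Hev in B3 by exact Ht.
    repeat split; try congruence. }
  intros t Ht.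
  destruct (HfrT t Ht) as (A1 & A2 & A3 & A4 & A5 & A6 & A7 & A8).
  destruct (Hfrb t Ht) as (B1 & B2 & B3 & B4 & B5 & B6 & B7 & B8).
  destruct (P t Ht) as (Px & Py & Pz & Px0).
  rewrite Hev in B6, B8, B4 by exact Ht.
  assert (Hloc := oint_loc c d t Ht).
  assert (BTN : dot (BT t) (NT t) = 0) by (rewrite A4; apply dot_cross_r).
  assert (BTT : dot (BT t) (TT t) = 0) by (rewrite A4; apply dot_cross_l).
  assert (NTT : dot (NT t) (TT t) = 0) by (rewrite dot_comm; exact A3).
  assert (Hkb : kb t = - kT t * y t).
  { assert (D := der_dot _ _ _ _ _ B6 A6).
    eapply deriv_zero_loc in D; [| exact Hloc |].
    - rewrite dot_scall, dot_scalr, A1, <- Py in D. lra.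
    - intros u Hu. destruct (P u Hu) as (? & _ & _ & ?). simpl. congruence. }
  assert (Htb : taub t = kT t * z t).
  { assert (D := der_dot _ _ _ _ _ B8 A6).
    eapply deriv_zero_loc in D; [| exact Hloc |].
    - rewrite dot_scall, dot_scalr, A1, B4, triple, <- A4, <- Pz in D. lra.
    - intros u Hu. destruct (Hfrb u Hu) as (_ & _ & _ & E & _).
      rewrite E, Hev by exact Hu. apply dot_cross_r. }
  assert (Hyz : y t ^ 2 + z t ^ 2 = 1).
  { assert (E := Hxyz t Ht). rewrite Px0 in E. lra. }
  assert (Hy : y t < 0).
  { assert (0 < kT t * (- y t)) by (rewrite <- Ropp_mult_distr_r, Ropp_mult_distr_l, <- Hkb; lra).
    destruct (Rlt_or_le (y t) 0); auto. nra. }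
  split; [exact A5|]. split; [exact Hkb|]. split; [exact Htb|]. split; [|split; [|split; [exact Hyz|exact Hy]]].
  - assert (DD := der_dot _ _ _ _ _ B6 A7).
    replace (tauT t * z t) with (dot (vscal (kb t) (TT t)) (NT t) +
      dot (X t) (vadd (vscal (- kT t) (TT t)) (vscal (tauT t) (BT t)))).
    2:{ rewrite dot_scall, dot_addr, !dot_scalr, A3, <- Px, <- Pz, Px0. ring. }
    eapply is_derive_ext_loc; [| exact DD].
    eapply filter_imp; [|exact Hloc]. intros u Hu. destruct (P u Hu) as (_ & ? & _). auto.
  - assert (DD := der_dot _ _ _ _ _ B6 A8).
    replace (- tauT t * y t) with (dot (vscal (kb t) (TT t)) (BT t) +
      dot (X t) (vscal (- tauT t) (NT t))).
    2:{ rewrite dot_scall, !dot_scalr, (dot_comm (TT t)), BTT, <- Py. ring. }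
    eapply is_derive_ext_loc; [| exact DD].
    eapply filter_imp; [|exact Hloc]. intros u Hu. destruct (P u Hu) as (_ & _ & ? & _). auto.
Qed.
Theorem corollary4p4
  (* the curve alpha, parameter s in the open interval I = (a,b) *)
  (a b : Rbar) (alpha T N B : R -> vec3) (kappa tau : R -> R)
  (Halpha : forall s, oint a b s -> is_derive alpha s (T s))
  (Hfr : frenet_apparatus (oint a b) T N B kappa tau)
  (* arc length s_T = sigma(s) of the tangent indicatrix, with sigma' = kappa,
     mapping I onto the open interval J = (c,d) *)
  (c d : Rbar) (sigma : R -> R)
  (Hsig : forall s, oint a b s -> is_derive sigma s (kappa s))
  (HsigI : forall s, oint a b s -> oint c d (sigma s))
  (HsigJ : forall t, oint c d t -> exists s, oint a b s /\ sigma s = t)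
  (* tangent indicatrix alpha_T(s_T), alpha_T(sigma s) = T(s), with its Frenet
     apparatus w.r.t. s_T *)
  (alphaT TT NT BT : R -> vec3) (kT tauT : R -> R)
  (HaT : forall s, oint a b s -> alphaT (sigma s) = T s)
  (HaTd : forall t, oint c d t -> is_derive alphaT t (TT t))
  (HfrT : frenet_apparatus (oint c d) TT NT BT kT tauT)
  (* X-direction curve beta of alpha_T *)
  (x y z : R -> R) (beta Nb Bb : R -> vec3) (kb taub : R -> R)
  (Hxyz : forall t, oint c d t -> x t ^ 2 + y t ^ 2 + z t ^ 2 = 1)
  (Hbeta : forall t, oint c d t ->
     is_derive beta t
       (vadd (vadd (vscal (x t) (TT t)) (vscal (y t) (NT t))) (vscal (z t) (BT t))))
  (Hfrb : frenet_apparatus (oint c d)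
     (fun t => vadd (vadd (vscal (x t) (TT t)) (vscal (y t) (NT t))) (vscal (z t) (BT t)))
     Nb Bb kb taub)
  (* evolute-direction condition N_beta = T_T *)
  (Hev : forall t, oint c d t -> Nb t = TT t) :
  (exists phi : R -> R,
     (forall t, oint c d t -> is_derive phi t (tauT t)) /\
     (forall t, oint c d t -> taub t / kb t = - cot (phi t))) /\
  (forall t, oint c d t ->
     ex_derive (fun u => taub u / kb u) t /\
     tauT t / kT t =
       kb t ^ 2 / Rpower (kb t ^ 2 + taub t ^ 2) (3 / 2)
       * Derive (fun u => taub u / kb u) t).
Proof.
  assert (K := key c d TT NT BT kT tauT HfrT x y z Nb Bb kb taub Hxyz Hfrb Hev).
  assert (Hw : forall t, oint c d t ->
    is_derive (fun u => - z u / y u) t (tauT t / y t ^ 2)).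
  { intros t Ht. destruct (K t Ht) as (Hk & Hkb & Htb & Dy & Dz & Hyz & Hy).
    assert (Dz' : is_derive (fun u => - z u) t (- (- tauT t * y t))) by exact (is_derive_opp _ _ _ Dz).
    assert (E := is_derive_div _ _ _ _ _ Dz' Dy ltac:(lra)).
    replace (tauT t / y t ^ 2) with ((- (- tauT t * y t) * y t - - z t * (tauT t * z t)) / y t ^ 2).
    - exact E.
    - replace (- (- tauT t * y t) * y t - - z t * (tauT t * z t)) with (tauT t * (y t^2 + z t^2)) by ring.
      rewrite Hyz, Rmult_1_r. reflexivity. }
  assert (Heq : forall t, oint c d t -> taub t / kb t = - z t / y t).
  { intros t Ht. destruct (K t Ht) as (Hk & Hkb & Htb & Dy & Dz & Hyz & Hy).
    rewrite Hkb, Htb. field. split; lra. }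
  split.
  - exists (fun u => PI / 2 + atan (- z u / y u)). split.
    + intros t Ht. destruct (K t Ht) as (Hk & Hkb & Htb & Dy & Dz & Hyz & Hy).
      assert (A := proj2 (is_derive_Reals _ _ _) (derivable_pt_lim_atan (- z t / y t))).
      assert (C := is_derive_comp atan (fun u => - z u / y u) t _ _ A (Hw t Ht)).
      assert (C2 := is_derive_plus _ _ _ _ _ (is_derive_const (V:=R_NormedModule) (PI/2) t) C).
      replace (tauT t) with (plus zero (scal (tauT t / y t ^ 2) (/ (1 + (- z t / y t) ^ 2)))).
      * eapply is_derive_ext; [|exact C2]. intros; reflexivity.
      * unfold plus, zero, scal; simpl; unfold mult; simpl.
        assert (Hy0 : y t <> 0) by lra.
        rewrite !Rmult_1_r.
        replace (1 + - z t / y t * (- z t / y t)) with (/ (y t * y t)).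
        { field. auto. }
        replace (/ (y t * y t)) with ((y t ^ 2 + z t ^ 2) / (y t * y t)) by (rewrite Hyz; field; auto). field. auto.
    + intros t Ht. rewrite Heq by exact Ht. unfold cot.
      rewrite cos_plus, sin_plus, cos_PI2, sin_PI2.
      set (w := - z t / y t).
      assert (Hc : 0 < cos (atan w)).
      { rewrite cos_atan. apply Rdiv_lt_0_compat; [lra|]. apply sqrt_lt_R0. unfold Rsqr. nra. }
      assert (TA := tan_atan w). unfold tan in TA.
      rewrite <- TA at 1. field. lra.
  - intros t Ht. destruct (K t Ht) as (Hk & Hkb & Htb & Dy & Dz & Hyz & Hy).
    assert (D : is_derive (fun u => taub u / kb u) t (tauT t / y t ^ 2)).
    { eapply is_derive_ext_loc; [| exact (Hw t Ht)].
      eapply filter_imp; [|exact (oint_loc c d t Ht)]. intros u Hu. symmetry. apply Heq; exact Hu. }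
    split; [eexists; exact D|].
    replace (Derive (fun u => taub u / kb u) t) with (tauT t / y t ^ 2) by (symmetry; apply is_derive_unique; exact D).
    replace (kb t ^ 2 + taub t ^ 2) with (Rpower (kT t) (INR 2)).
    2:{ rewrite Rpower_pow by lra. rewrite Hkb, Htb. replace (kT t ^ 2) with (kT t ^ 2 * (y t ^ 2 + z t ^ 2)) at 1 by (rewrite Hyz; ring). ring. }
    rewrite Rpower_mult. replace (INR 2 * (3 / 2)) with (INR 3) by (simpl; field).
    rewrite Rpower_pow by lra. rewrite Hkb. field. split; lra.
Qed.
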